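(* Let $W$ be an admissible sequence of vertices and $I$ an admissible sequence of indices with $0\le|W|=|I|\le|V|-2$, let $Z$ be a complex $|E|\times\frac{k(k+1)}2$ matrix, and let $\epsilon>0$ and $0\le\theta<2\pi/3$ be reals with $\epsilon<\cos(\theta/2)$. Suppose that for any two vertices $u,v\in V$ and any $i,j\in\{1,\dots,k\}$ such that $(W,u,v)$ and $(I,i,j)$ are admissible, we have $\mathcal{Q}^{(W,u,v)}_{(I,i,j)}(Z)\ne0$, $\mathcal{Q}^{(W,u,v)}_{(I,j,i)}(Z)\ne0$ and $$\left|\frac{\mathcal{Q}^{(W,u,v)}_{(I,i,j)}(Z)}{\mathcal{Q}^{(W,u,v)}_{(I,j,i)}(Z)}-1\right|\le\epsilon.$$ (1) Suppose in addition that for any $u,v\in V$ and any $i,j_1,j_2\in\{1,\dots,k\}$ such that $(W,u,v)$, $(I,i,j_1)$, $(I,i,j_2)$ are admissible, the angle between $\mathcal{Q}^{(W,u,v)}_{(I,i,j_1)}(Z)$ and $\mathcal{Q}^{(W,u,v)}_{(I,i,j_2)}(Z)$ does not exceed $\theta$. Then for any $u,v\in V$ and any $i$ such that $(W,u)$, $(W,v)$, $(I,i)$ are admissible, we have $\mathcal{Q}^{(W,u)}_{(I,i)}(Z)\ne0$, $\mathcal{Q}^{(W,v)}_{(I,i)}(Z)\ne0$, and the angle between them does not exceed $\arcsin\frac{\epsilon}{\cos(\theta/2)}$. (2) Suppose instead that for any $u,v_1,v_2\in V$ and any $i,j\in\{1,\dots,k\}$ such that $(W,u,v_1)$, $(W,u,v_2)$,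 $(I,i,j)$ are admissible, the angle between $\mathcal{Q}^{(W,u,v_1)}_{(I,i,j)}(Z)$ and $\mathcal{Q}^{(W,u,v_2)}_{(I,i,j)}(Z)$ does not exceed $\theta$. Then for any $u\in V$ and any $i,j$ such that $(W,u)$, $(I,i)$, $(I,j)$ are admissible, we have $\mathcal{Q}^{(W,u)}_{(I,i)}(Z)\ne0$, $\mathcal{Q}^{(W,u)}_{(I,j)}(Z)\ne0$, and the angle between them does not exceed $\arcsin\frac{\epsilon}{\cos(\theta/2)}$.
   Context: Fix a finite simple undirected graph $G=(V,E)$ and positive integers $m=(\mu_1,\dots,\mu_k)$ with $\sum\mu_i=|V|$. A complex $|E|\times\frac{k(k+1)}2$ matrix $Z=(z^{uv}_{ij})$ has entries indexed by edges $\{u,v\}\in E$ and unordered pairs $\{i,j\}$, $1\le i,j\le k$. A sequence $W=(v_1,\dots,v_n)$ of vertices is admissible if the $v_j$ are distinct. For a sequence $I=(i_1,\dots,i_n)$ of indices in $\{1,\dots,k\}$, $\nu_i(I)=|\{j: i_j=i\}|$; $I$ is admissible if $\nu_i(I)\le\mu_i$ for all $i$. For admissible $W=(v_1,\dots,v_n)$, $I=(i_1,\dots,i_n)$ of equal length, $$\mathcal{Q}^W_I(Z)=\sum_{\substack{\phi:V\to\{1,\dots,k\}\\ |\phi^{-1}(i)|=\mu_i\ (i=1,\dots,k)\\ \phi(v_j)=i_j\ (j=1,\dots,n)}}\ \prod_{\{u,v\}\in E} z^{uv}_{\phi(u)\phi(v)}.$$ $(W,v)$ denotes $W$ with vertex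 $v$ appended, $(I,i)$ denotes $I$ with index $i$ appended, and similarly for several elements. Angles are between nonzero complex numbers regarded as vectors in $\mathbb{R}^2\cong\mathbb{C}$. *)

(* Defs.v *)
From HB Require Import structures.
From mathcomp Require Import all_boot all_order all_algebra.
From mathcomp Require Import complex.
From mathcomp Require Import reals trigo.
Set Implicit Arguments. Unset Strict Implicit. Unset Printing Implicit Defensive.
Import Order.TTheory GRing.Theory Num.Theory.
Local Open Scope ring_scope.

Definition cabs (R : realType) (z : R[i]) : R :=
  Num.sqrt (complex.Re z ^+ 2 + complex.Im z ^+ 2).

Definition cangle (R : realType) (a b : R[i]) : R :=
  acos ((complex.Re a * complex.Re b + complex.Im a * complex.Im b) / (cabs a * cabs b)).

Definition simple_graph (V : finType) (E : {set {set V}}) : Prop :=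
  forall A, A \in E -> #|A| = 2%N.

Definition adm_W (V : finType) (W : seq V) : bool := uniq W.

Definition adm_I (k : nat) (mu : 'I_k -> nat) (I : seq 'I_k) : bool :=
  [forall i, count_mem i I <= mu i]%N.

(* The entry z^{uv}_{ij} is  Z [set u; v] [set i; j]
   (edge {u,v}, unordered index pair {i,j}); note phi @: [set u; v]
   = [set phi u; phi v]. *)
Definition Qpoly (R : realType) (V : finType) (E : {set {set V}}) (k : nat)
    (mu : 'I_k -> nat) (Z : {set V} -> {set 'I_k} -> R[i])
    (W : seq V) (I : seq 'I_k) : R[i] :=
  \sum_(phi : {ffun V -> 'I_k} |
          [forall i, #|phi @^-1: [set i]| == mu i] &&
          all2 (fun v i => phi v == i) W I)
    \prod_(A in E) Z A (phi @: A).

(* Main.v *)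
Require Import Defs.
From HB Require Import structures.
From mathcomp Require Import all_boot all_order all_algebra.
From mathcomp Require Import complex.
From mathcomp Require Import reals trigo.
From mathcomp Require Import ring lra zify.
Import Order.TTheory GRing.Theory Num.Theory.
Local Open Scope ring_scope.


Lemma key2d (R : realFieldType) (a b C : R) :
  C <= a -> C <= b -> 0 < 2 * C + 1 -> C <= 1 ->
  1 + 2 * a * b * C - a ^+ 2 - b ^+ 2 - C ^+ 2 = 0 -> 1 + C <= a + b.
Proof.
move=> ha hb hC hC1 E.
have h1 : (a - b) ^+ 2 <= (a + b - 2 * C) ^+ 2 by nra.
have E2 : 2 * ((a + b - (1 + C)) * (a + b - (1 + C) * (2 * C - 1))) =
     ((1 + C) * (a + b - 2 * C) ^+ 2 - (1 + C) * (a - b) ^+ 2) by nra.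
have h2 : 0 <= (a + b - (1 + C)) * (a + b - (1 + C) * (2 * C - 1)) by nra.
have h3 : (1 - C) * (2 * C + 1) <= a + b - (1 + C) * (2 * C - 1) by nra.
case: (lerP (1 + C) (a + b)) => // hlt.
have : a + b - (1 + C) * (2 * C - 1) <= 0 by nra.
nra.
Qed.

Section Geo.
Context {R : realType}.
Implicit Types x y z p q : R[i].

Lemma cabsE x : cabs x = Normc.normc x. Proof. by case: x. Qed.
Lemma cabs_ge0 x : 0 <= cabs x. Proof. exact: sqrtr_ge0. Qed.
Lemma cabs_sq x : cabs x ^+ 2 = complex.Re x ^+ 2 + complex.Im x ^+ 2.
Proof. by rewrite /cabs sqr_sqrtr // addr_ge0 // sqr_ge0. Qed.
Lemma cabs0 : cabs (0 : R[i]) = 0.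
Proof. by rewrite /cabs /= expr0n /= addr0 sqrtr0. Qed.
Lemma cabs_eq0 x : (cabs x == 0) = (x == 0).
Proof.
apply/eqP/eqP => [|->]; last exact: cabs0.
by rewrite cabsE; exact: Normc.eq0_normc.
Qed.
Lemma cabs_gt0 x : x != 0 -> 0 < cabs x.
Proof. by move=> h; rewrite lt_neqAle cabs_ge0 andbT eq_sym cabs_eq0. Qed.
Lemma cabsM x y : cabs (x * y) = cabs x * cabs y.
Proof. rewrite !cabsE; exact: Normc.normcM. Qed.
Lemma cabsD x y : cabs (x + y) <= cabs x + cabs y.
Proof. rewrite !cabsE; exact: le_normcD. Qed.
Lemma ReD x y : complex.Re (x + y) = complex.Re x + complex.Re y. Proof. by case: x; case: y. Qed.
Lemma ImD x y : complex.Im (x + y) = complex.Im x + complex.Im y. Proof. by case: x; case: y. Qed.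

Lemma cabs_sum (J : finType) (P : pred J) (F : J -> R[i]) :
  cabs (\sum_(j | P j) F j) <= \sum_(j | P j) cabs (F j).
Proof.
elim/big_rec2: _ => [|j y1 y2 _ h]; first by rewrite cabs0.
by apply: le_trans (cabsD _ _) _; rewrite lerD2l.
Qed.
Lemma Re_sum (J : finType) (P : pred J) (F : J -> R[i]) :
  complex.Re (\sum_(j | P j) F j) = \sum_(j | P j) complex.Re (F j).
Proof.
by elim/big_rec2: _ => // j y1 y2 _ <-; rewrite ReD.
Qed.
Lemma Im_sum (J : finType) (P : pred J) (F : J -> R[i]) :
  complex.Im (\sum_(j | P j) F j) = \sum_(j | P j) complex.Im (F j).
Proof.
by elim/big_rec2: _ => // j y1 y2 _ <-; rewrite ImD.
Qed.

Definition dot x y := complex.Re x * complex.Re y + complex.Im x * complex.Im y.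
Definition ncos x y := dot x y / (cabs x * cabs y).

Lemma dotC x y : dot x y = dot y x.
Proof. by rewrite /dot mulrC [complex.Im x * _]mulrC. Qed.
Lemma ncosC x y : ncos x y = ncos y x.
Proof. by rewrite /ncos dotC [cabs x * _]mulrC. Qed.

Lemma dot_sq x y : dot x y ^+ 2 <= cabs x ^+ 2 * cabs y ^+ 2.
Proof.
rewrite !cabs_sq /dot -subr_ge0.
have -> : (complex.Re x ^+ 2 + complex.Im x ^+ 2) * (complex.Re y ^+ 2 + complex.Im y ^+ 2) -
  (complex.Re x * complex.Re y + complex.Im x * complex.Im y) ^+ 2 =
  (complex.Re x * complex.Im y - complex.Im x * complex.Re y) ^+ 2 by ring.
exact: sqr_ge0.
Qed.

Lemma CS x y : `|dot x y| <= cabs x * cabs y.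
Proof.
have h := dot_sq x y; have hx := cabs_ge0 x; have hy := cabs_ge0 y.
rewrite -[X in X <= _]sqrtr_sqr -[cabs x * cabs y]ger0_norm ?mulr_ge0 //.
by rewrite -sqrtr_sqr ler_wsqrtr // exprMn.
Qed.

Lemma ncos_bound x y : x != 0 -> y != 0 -> -1 <= ncos x y <= 1.
Proof.
move=> hx hy; have := CS x y; rewrite -ler_norml /ncos normrM.
have hp : 0 < cabs x * cabs y by rewrite mulr_gt0 // cabs_gt0.
by rewrite normfV (ger0_norm (ltW hp)) ler_pdivrMr // mul1r.
Qed.

Lemma gram x p q : x != 0 -> p != 0 -> q != 0 ->
  1 + 2 * ncos x p * ncos x q * ncos p q - ncos x p ^+ 2 - ncos x q ^+ 2 - ncos p q ^+ 2 = 0.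
Proof.
move=> hx hp hq.
have X0 : cabs x != 0 by rewrite cabs_eq0.
have P0 : cabs p != 0 by rewrite cabs_eq0.
have Q0 : cabs q != 0 by rewrite cabs_eq0.
have E : 1 + 2 * ncos x p * ncos x q * ncos p q - ncos x p ^+ 2 - ncos x q ^+ 2 - ncos p q ^+ 2
  = (cabs x ^+ 2 * cabs p ^+ 2 * cabs q ^+ 2 + 2 * dot x p * dot x q * dot p q
     - cabs q ^+ 2 * dot x p ^+ 2 - cabs p ^+ 2 * dot x q ^+ 2
     - cabs x ^+ 2 * dot p q ^+ 2) / (cabs x ^+ 2 * cabs p ^+ 2 * cabs q ^+ 2).
  by rewrite /ncos; field; rewrite X0 P0 Q0.
rewrite E !cabs_sq /dot; apply/eqP; rewrite mulf_eq0; apply/orP; left; apply/eqP.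
ring.
Qed.

End Geo.
Arguments cabs_gt0 {R x}.
Arguments ncos_bound {R x y}.
Arguments gram {R x p q}.


Section Trig.
Context {R : realType}.

Lemma acos_le_cos (t th : R) : -1 <= t <= 1 -> 0 <= th <= pi -> acos t <= th -> cos th <= t.
Proof.
move=> ht hth hle; rewrite leNgt; apply/negP => hlt.
have ha : acos t \in `[0, pi] by rewrite in_itv /= acos_ge0 // acos_lepi.
have hb : th \in `[0, pi] by rewrite in_itv /=.
have : cos (acos t) < cos th by rewrite acosK // in_itv /=.
by rewrite ltr_cos // => h; have := lt_le_trans h hle; rewrite ltxx.
Qed.

Lemma cos_pi3 : cos (pi / 3%:R) = 2^-1 :> R.
Proof.
set x := pi / 3%:R.
have hpi : pi = x + x *+ 2 by rewrite /x mulr2n; field.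
have E := @cospi R; rewrite hpi cosD cos_mulr2n sin_mulr2n in E.
have S := sin2cos2 x.
have c0 : 0 < cos x.
  apply: cos_gt0_pihalf; have := pi_gt0 R; rewrite /x => hp.
  apply/andP; split; nra.
move: E S c0; rewrite !mulr2n; move: (cos x) (sin x) => c s E S c0.
have E1 : (c + 1) * (2 * c - 1) ^+ 2 = 0 by nra.
move/eqP: E1; rewrite mulf_eq0 expf_eq0 /= => /orP[|] /eqP h; first by lra.
apply: (@mulfI _ 2); first by rewrite pnatr_eq0.
rewrite mulfV ?pnatr_eq0 //; lra.
Qed.

Lemma cos_half_gt (th : R) : 0 <= th -> th < 2%:R * pi / 3%:R -> 2^-1 < cos (th / 2%:R).
Proof.
move=> h0 h1; rewrite -[X in X < _]cos_pi3.
have hp := pi_gt0 R.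
rewrite ltr_cos ?in_itv /=; [lra|apply/andP; split; lra|apply/andP; split; lra].
Qed.

Lemma acos_le_asin (t r : R) : 0 <= r < 1 -> -1 <= t <= 1 ->
  Num.sqrt (1 - r ^+ 2) <= t -> acos t <= asin r.
Proof.
move=> /andP[r0 r1] ht hs.
have r11 : -1 <= r <= 1 by apply/andP; split; lra.
have hp := pi_gt0 R.
have hA : asin r \in `[0, pi].
  rewrite in_itv /=; apply/andP; split; last first.
    by apply: le_trans (asin_lepi2 r11) _; lra.
  rewrite leNgt; apply/negP => hneg.
  have m1 : asin r \in `[(- (pi/2)), pi/2].
    by rewrite in_itv /= asin_geNpi2 // asin_lepi2.
  have m2 : (0:R) \in `[(- (pi/2)), pi/2].
    by rewrite in_itv /=; apply/andP; split; lra.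
  have : sin (asin r) < sin 0 by rewrite ltr_sin.
  by rewrite asinK ?in_itv // sin0; lra.
have hB : acos t \in `[0, pi] by rewrite in_itv /= acos_ge0 // acos_lepi.
rewrite leNgt; apply/negP => hlt.
have : cos (acos t) < cos (asin r) by rewrite ltr_cos.
rewrite acosK ?in_itv // cos_asin //; lra.
Qed.

End Trig.


Section Geo3.
Context {R : realType}.
Implicit Types A B : R[i].

Lemma final_angle A B (r : R) : B != 0 -> 0 <= r < 1 ->
  cabs (A - B) <= r * cabs B -> A != 0 /\ cangle A B <= asin r.
Proof.
move=> hB /andP[r0 r1] hD.
have XB := cabs_gt0 hB.
have hdotD := CS (A - B) B.
have hDB : dot A B = cabs B ^+ 2 + dot (A - B) B.
  rewrite cabs_sq /dot -[A - B]/(A + - B) ReD ImD.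
  have -> : complex.Re (- B) = - complex.Re B by case: (B).
  have -> : complex.Im (- B) = - complex.Im B by case: (B).
  ring.
have XD := cabs_ge0 (A - B).
have hdot : (1 - r) * cabs B ^+ 2 <= dot A B.
  rewrite hDB; move: hdotD; rewrite ler_norml => /andP[h1 _]; nra.
have hA : A != 0.
  apply/eqP => hA0; move: hdot; rewrite hA0 /dot /=.
  rewrite !mul0r addr0 => h.
  have : 0 < (1 - r) * cabs B ^+ 2 by rewrite mulr_gt0 ?exprn_gt0 // subr_gt0.
  lra.
have XA := cabs_gt0 hA.
split => //.
set cr := complex.Re A * complex.Im B - complex.Im A * complex.Re B.
have hlag : dot A B ^+ 2 + cr ^+ 2 = cabs A ^+ 2 * cabs B ^+ 2.
  by rewrite !cabs_sq /dot /cr; ring.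
have hcr : cr ^+ 2 <= cabs A ^+ 2 * cabs (A - B) ^+ 2.
  have -> : cr = - (complex.Re A * complex.Im (A - B) - complex.Im A * complex.Re (A - B)).
    rewrite /cr -[A - B]/(A + - B) ReD ImD.
    have -> : complex.Re (- B) = - complex.Re B by case: (B).
    have -> : complex.Im (- B) = - complex.Im B by case: (B).
    ring.
  rewrite !cabs_sq sqrrN -subr_ge0.
  set a1 := complex.Re A; set a2 := complex.Im A.
  set d1 := complex.Re (A - B); set d2 := complex.Im (A - B).
  have -> : (a1 ^+ 2 + a2 ^+ 2) * (d1 ^+ 2 + d2 ^+ 2) - (a1 * d2 - a2 * d1) ^+ 2 =
    (a1 * d1 + a2 * d2) ^+ 2 by ring.
  exact: sqr_ge0.
have hD2 : cabs (A - B) ^+ 2 <= r ^+ 2 * cabs B ^+ 2.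
  have h0 : 0 <= r * cabs B - cabs (A - B) by lra.
  have h0' : 0 <= r * cabs B + cabs (A - B) by lra.
  have := mulr_ge0 h0 h0'; nra.
have hsq : (1 - r ^+ 2) * (cabs A ^+ 2 * cabs B ^+ 2) <= dot A B ^+ 2.
  have : cr ^+ 2 <= r ^+ 2 * (cabs A ^+ 2 * cabs B ^+ 2).
    apply: le_trans hcr _.
    rewrite [r ^+ 2 * _]mulrCA; apply: ler_wpM2l => //.
    exact: exprn_ge0 (ltW XA).
  nra.
have hAB : 0 < cabs A * cabs B by rewrite mulr_gt0.
have hn : 0 <= ncos A B.
  rewrite /ncos divr_ge0 // ?(ltW hAB) //; nra.
have hn2 : 1 - r ^+ 2 <= ncos A B ^+ 2.
  rewrite /ncos expr_div_n ler_pdivlMr ?exprn_gt0 // exprMn; nra.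
change (acos (ncos A B) <= asin r).
apply: acos_le_asin; first by apply/andP.
  exact: ncos_bound.
rewrite -(ger0_norm hn) -sqrtr_sqr.
exact: ler_wsqrtr.
Qed.

Lemma cone (J : finType) (P : pred J) (b : J -> R[i]) (ct : R) (j0 : J) :
  P j0 -> (forall j, P j -> b j != 0) ->
  (forall j l, P j -> P l -> ct <= ncos (b j) (b l)) -> 0 < 2 * ct + 1 ->
  (1 + ct) * (\sum_(j | P j) cabs (b j)) ^+ 2 <= 2 * cabs (\sum_(j | P j) b j) ^+ 2.
Proof.
move=> Pj0 bn0 hang hct.
pose F (x : J * J) := ncos (b x.1) (b x.2).
have P0 : (fun x : J * J => P x.1 && P x.2) (j0, j0) by rewrite /= Pj0.
case: (@arg_minP _ R _ (j0, j0) (fun x => P x.1 && P x.2) F P0) => [[p q]] /andP[/= Pp Pq] hmin.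
set C := F (p, q).
have hC : ct <= C by exact: hang.
have hC1 : C <= 1 by have /andP[] := ncos_bound (bn0 _ Pp) (bn0 _ Pq).
have Xp := cabs_gt0 (bn0 _ Pp); have Xq := cabs_gt0 (bn0 _ Pq).
pose w : R[i] := Complex
  (complex.Re (b p) / cabs (b p) + complex.Re (b q) / cabs (b q))
  (complex.Im (b p) / cabs (b p) + complex.Im (b q) / cabs (b q)).
have claim1 : forall j, P j -> (1 + C) * cabs (b j) <= dot (b j) w.
  move=> j Pj.
  have Xj := cabs_gt0 (bn0 _ Pj).
  have -> : dot (b j) w = cabs (b j) * (ncos (b j) (b p) + ncos (b j) (b q)).
    rewrite /dot /ncos /dot /=; field.
    by rewrite !gt_eqF.
  rewrite mulrC; apply: ler_wpM2l; first exact: ltW.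
  apply: key2d.
  - by apply: (hmin (j, p)); rewrite /= Pj.
  - by apply: (hmin (j, q)); rewrite /= Pj.
  - lra.
  - done.
  - by rewrite /C /F /=; exact: gram (bn0 _ Pj) (bn0 _ Pp) (bn0 _ Pq).
have claim2 : dot (\sum_(j | P j) b j) w = \sum_(j | P j) dot (b j) w.
  rewrite /dot Re_sum Im_sum !mulr_suml -big_split.
  done.
have claim3 : cabs w ^+ 2 = 2 + 2 * C.
  rewrite cabs_sq /C /F /ncos /dot /=.
  have hp2 := cabs_sq (b p); have hq2 := cabs_sq (b q).
  have E : forall x y : R, x = y -> x - y = 0 by move=> x y ->; rewrite subrr.
  apply/eqP; rewrite -subr_eq0; apply/eqP.
  have -> : (complex.Re (b p) / cabs (b p) + complex.Re (b q) / cabs (b q)) ^+ 2 +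
    (complex.Im (b p) / cabs (b p) + complex.Im (b q) / cabs (b q)) ^+ 2 -
    (2 + 2 * ((complex.Re (b p) * complex.Re (b q) + complex.Im (b p) * complex.Im (b q)) /
       (cabs (b p) * cabs (b q)))) =
    (complex.Re (b p) ^+ 2 + complex.Im (b p) ^+ 2 - cabs (b p) ^+ 2) / cabs (b p) ^+ 2 +
    (complex.Re (b q) ^+ 2 + complex.Im (b q) ^+ 2 - cabs (b q) ^+ 2) / cabs (b q) ^+ 2.
    by field; rewrite !gt_eqF.
  by rewrite -hp2 -hq2 !subrr !mul0r addr0.
set S := \sum_(j | P j) cabs (b j).
set B := \sum_(j | P j) b j.
have hS : 0 <= S by apply: sumr_ge0 => j _; exact: cabs_ge0.
have h1 : (1 + C) * S <= dot B w.
  rewrite /B claim2 /S mulr_sumr; apply: ler_sum => j Pj; exact: claim1.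
have h2 : dot B w <= cabs B * cabs w.
  by apply: le_trans (CS B w); exact: ler_norm.
have hw := cabs_ge0 w; have hB := cabs_ge0 B.
have h3 : ((1 + C) * S) ^+ 2 <= cabs B ^+ 2 * (2 + 2 * C).
  rewrite -claim3 -exprMn.
  have h12 := le_trans h1 h2.
  have h0 : 0 <= (1 + C) * S by rewrite mulr_ge0 //; lra.
  have h0' : 0 <= cabs B * cabs w - (1 + C) * S by lra.
  have := mulr_ge0 h0' (addr_ge0 h0 (mulr_ge0 hB hw)); nra.
have hC0 : 0 < 1 + C by lra.
clear -h3 hC hC0 hS; move: h3 hC hC0 hS; move: (cabs B) S C => x s c h3 hc hc0 hs.
have h4 : (1 + c) * ((1 + c) * s ^+ 2) <= (1 + c) * (2 * x ^+ 2).
  by move: h3; rewrite !exprMn; nra.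
rewrite ler_pM2l // in h4.
apply: le_trans h4; apply: ler_wpM2r; [exact: sqr_ge0|lra].
Qed.

End Geo3.


Section Geo4.
Context {R : realType}.

Lemma analytic (J : finType) (P : pred J) (a b : J -> R[i]) (eps theta : R) (j0 : J) :
  0 < eps -> 0 <= theta -> theta < 2%:R * pi / 3%:R -> eps < cos (theta / 2%:R) -> P j0 ->
  (forall j, P j -> b j != 0 /\ cabs (a j / b j - 1) <= eps) ->
  (forall j l, P j -> P l -> cangle (b j) (b l) <= theta) ->
  [/\ \sum_(j | P j) a j != 0, \sum_(j | P j) b j != 0 &
      cangle (\sum_(j | P j) a j) (\sum_(j | P j) b j) <= asin (eps / cos (theta / 2%:R))].
Proof.
move=> he ht0 ht1 hec Pj0 hab hang.
have hc := cos_half_gt theta ht0 ht1.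
set c := cos (theta / 2%:R) in hec hc *.
have hpi := pi_gt0 R.
have hct : cos theta = 2 * c ^+ 2 - 1.
  have := cos_mulr2n (theta / 2%:R).
  have -> : (theta / 2%:R) *+ 2 = theta by rewrite mulr2n; field.
  by move=> ->; rewrite mulr2n /c; ring.
have bn0 : forall j, P j -> b j != 0 by move=> j /hab [].
have hang' : forall j l, P j -> P l -> cos theta <= ncos (b j) (b l).
  move=> j l Pj Pl; apply: acos_le_cos.
  - exact: ncos_bound (bn0 _ Pj) (bn0 _ Pl).
  - apply/andP; split => //; lra.
  - exact: hang.
have hcone := @cone _ J P b (cos theta) j0 Pj0 bn0 hang'.
rewrite hct in hcone.
have {}hcone := hcone ltac:(nra).
set S := \sum_(j | P j) cabs (b j) in hcone.
set B := \sum_(j | P j) b j in hcone *.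
set A := \sum_(j | P j) a j.
have hS : cabs (b j0) <= S.
  rewrite /S (bigD1 j0) //= lerDl; apply: sumr_ge0 => j _; exact: cabs_ge0.
have hS0 : 0 < S := lt_le_trans (cabs_gt0 (bn0 _ Pj0)) hS.
have hBS : c * S <= cabs B.
  have hB := cabs_ge0 B.
  have h0 : 0 <= c * S by rewrite mulr_ge0 //; lra.
  clear -hcone hB h0 hc.
  move: hcone hB h0; move: (cabs B) S => x s hcone hB h0.
  nra.
have hB0 : B != 0.
  rewrite -cabs_eq0; apply/negP => /eqP h; rewrite h in hBS.
  have : 0 < c * S by rewrite mulr_gt0 //; lra.
  lra.
have hAB : cabs (A - B) <= eps * S.
  rewrite /A /B -sumrB; apply: le_trans (cabs_sum _ _ _) _.
  rewrite /S mulr_sumr; apply: ler_sum => j Pj.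
  have [bj hj] := hab j Pj.
  have -> : a j - b j = b j * (a j / b j - 1) by rewrite mulrBr mulr1 mulrC divfK.
  rewrite cabsM mulrC; apply: ler_wpM2r => //; exact: cabs_ge0.
have hc0 : 0 < c by lra.
have hr : 0 <= eps / c < 1.
  apply/andP; split; first by rewrite divr_ge0 //; lra.
  by rewrite ltr_pdivrMr // mul1r.
have hAB' : cabs (A - B) <= eps / c * cabs B.
  apply: le_trans hAB _.
  rewrite -mulrA ler_pM2l // ler_pdivlMl //.
have [hA0 hang2] := @final_angle _ A B (eps / c) hB0 hr hAB'.
by split.
Qed.

End Geo4.


Lemma all2_rcons (A B : Type) (f : A -> B -> bool) s t x y :
  size s = size t -> all2 f (rcons s x) (rcons t y) = all2 f s t && f x y.
Proof.
elim: s t => [|a s IH] [|b t] //= => [_|[/IH ->]]; first by rewrite andbT.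
by rewrite andbA.
Qed.

Lemma count_all2 (V : finType) (k : nat) (phi : {ffun V -> 'I_k}) W I i :
  all2 (fun v i => phi v == i) W I -> count_mem i I = count (fun v => phi v == i) W.
Proof.
elim: W I => [|w W IH] [|j I] //= /andP[/eqP <- /IH ->] //.
Qed.

Lemma count_le_fiber (V : finType) (k : nat) (phi : {ffun V -> 'I_k}) W i :
  uniq W -> (count (fun v => phi v == i) W <= #|phi @^-1: [set i]|)%N.
Proof.
move=> hu; rewrite -size_filter cardE; apply: uniq_leq_size; first exact: filter_uniq.
by move=> v; rewrite mem_filter mem_enum !inE => /andP[].
Qed.

Lemma count_card (V : finType) (p : pred V) W :
  uniq W -> #|[pred v | (v \in W) && p v]| = count p W.
Proof.
move=> hu; rewrite -size_filter.
have -> : #|[pred v | (v \in W) && p v]| = #|filter p W|.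
  by apply: eq_card => v; rewrite !inE mem_filter andbC.
by apply/card_uniqP; exact: filter_uniq.
Qed.

Lemma adm_rcons_lt k (mu : 'I_k -> nat) s j : adm_I mu (rcons s j) -> (count_mem j s < mu j)%N.
Proof.
move/forallP/(_ j); rewrite -cats1 count_cat /= eqxx addn0 addn1 //.
Qed.

Lemma adm_rcons_adm k (mu : 'I_k -> nat) s j : adm_I mu (rcons s j) -> adm_I mu s.
Proof.
move/forallP => h; apply/forallP => l; apply: leq_trans (h l).
by rewrite -cats1 count_cat leq_addr.
Qed.

Lemma adm_rcons k (mu : 'I_k -> nat) s j :
  adm_I mu s -> (count_mem j s < mu j)%N -> adm_I mu (rcons s j).
Proof.
move/forallP => h hj; apply/forallP => l; rewrite -cats1 count_cat /= addn0.
by case: eqP => [<-|_]; rewrite ?addn1 ?addn0 // h.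
Qed.

Lemma adm_swap k (mu : 'I_k -> nat) s i j :
  adm_I mu (rcons (rcons s i) j) = adm_I mu (rcons (rcons s j) i).
Proof.
rewrite /adm_I; apply: eq_forallb => l.
by rewrite -!cats1 !count_cat /= !addn0 addnAC.
Qed.

Lemma sum_count_mem k (s : seq 'I_k) : (\sum_(j < k) count_mem j s)%N = size s.
Proof.
elim: s => [|x s IH] /=; first by rewrite big1.
rewrite big_split /= IH (bigD1 x) //= eqxx big1 ?addn0 ?add1n // => j.
by rewrite eq_sym => /negbTE ->.
Qed.

Lemma exists_adm k (mu : 'I_k -> nat) s :
  adm_I mu s -> (size s < \sum_(j < k) mu j)%N -> exists j, adm_I mu (rcons s j).
Proof.
move=> hs hlt.
case: (pickP (fun j => count_mem j s < mu j)%N) => [j hj|hn].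
  by exists j; apply: adm_rcons.
exfalso; move: hlt; rewrite -sum_count_mem ltnNge => /negP; apply.
by apply: leq_sum => j _; move: (hn j) => /negbT; rewrite -leqNgt.
Qed.

Lemma exists_notin (V : finType) (s : seq V) : (size s < #|V|)%N -> exists v, v \notin s.
Proof.
move=> hlt.
case: (pickP (fun v => v \notin s)) => [v hv|hn]; first by exists v.
exfalso; move: hlt; rewrite ltnNge => /negP; apply.
apply: leq_trans (card_size s).
apply: subset_leq_card; apply/subsetP => v _.
by move: (hn v) => /negbT; rewrite negbK.
Qed.

Section Comb.
Context {R : realType} {V : finType} {E : {set {set V}}} {k : nat} {mu : 'I_k -> nat}
  {Z : {set V} -> {set 'I_k} -> R[i]}.

Local Notation Q := (Qpoly E mu Z).

Lemma Q_decomp W I v : size W = size I ->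
  Q W I = \sum_(j : 'I_k) Q (rcons W v) (rcons I j).
Proof.
move=> hs; rewrite /Qpoly.
rewrite (partition_big (fun phi : {ffun V -> 'I_k} => phi v) predT) //=.
apply: eq_bigr => j _; apply: eq_bigl => phi.
by rewrite all2_rcons // andbA.
Qed.

Lemma Q_nonadm W I : uniq W -> size W = size I -> ~~ adm_I mu I -> Q W I = 0.
Proof.
move=> hu hs hna; rewrite /Qpoly big1 // => phi /andP[/forallP hg hall].
exfalso; move/negP: hna; apply; apply/forallP => i.
rewrite (@count_all2 _ _ phi _ _ i hall) -(eqP (hg i)); exact: count_le_fiber.
Qed.

Lemma Q_swap W I u v i j : size W = size I ->
  Q (rcons (rcons W u) v) (rcons (rcons I i) j) = Q (rcons (rcons W v) u) (rcons (rcons I j) i).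
Proof.
move=> hs; rewrite /Qpoly; apply: eq_bigl => phi.
rewrite !all2_rcons ?size_rcons ?hs //.
by case: (phi u == i); case: (phi v == j); rewrite /= ?andbT ?andbF.
Qed.

Lemma Q_dc W I u i j : uniq (rcons W u) -> size W = size I ->
  \sum_(v | v \notin rcons W u) Q (rcons (rcons W u) v) (rcons (rcons I i) j)
  = (mu j - count_mem j (rcons I i))%:R * Q (rcons W u) (rcons I i).
Proof.
move=> hu hs.
have hs' : size (rcons W u) = size (rcons I i) by rewrite !size_rcons hs.
rewrite /Qpoly mulr_sumr.
under eq_bigr => v _ do under eq_bigl => phi do rewrite (@all2_rcons _ _ _ _ _ _ _ hs') andbA.
rewrite (exchange_big_dep (fun phi : {ffun V -> 'I_k} =>
   [forall i0, #|phi @^-1: [set i0]| == mu i0] && all2 (fun v i => phi v == i) (rcons W u) (rcons I i))) /=; last first.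
  by move=> v phi _ /andP[].
apply: eq_bigr => phi /andP[hg0 hall].
have hg := forallP hg0.
rewrite (eq_bigl (fun v => v \in [pred v | (v \notin rcons W u) && (phi v == j)])); last first.
  by move=> v; rewrite !inE hg0 hall.
rewrite sumr_const mulr_natl; congr (_ *+ _).
have hf := eqP (hg j).
have hc := @count_card _ (fun v => phi v == j) _ hu.
rewrite -(@count_all2 _ _ phi _ _ j hall) in hc.
have hID := cardID (mem (rcons W u)) [pred v | phi v == j].
rewrite -hf -hc.
have -> : #|phi @^-1: [set j]| = #|[pred v | phi v == j]| by apply: eq_card => v; rewrite !inE.
rewrite -hID.
have -> : #|[predI [pred v | phi v == j] & mem (rcons W u)]| = #|[pred v | (v \in rcons W u) && (phi v == j)]|.
  by apply: eq_card => v; rewrite !inE andbC.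
by rewrite addKn; apply: eq_card => v; rewrite !inE andbC.
Qed.

End Comb.


Lemma V_le1 (V : finType) (u v : V) : (#|V| <= 1)%N -> u = v.
Proof.
move=> h; apply/eqP; apply/negPn/negP => huv.
have := max_card [set u; v]; rewrite cards2 huv.
by move=> h2; have := leq_trans h2 h.
Qed.

Lemma k_le1 (V : finType) (k : nat) (mu : 'I_k -> nat) :
  (forall l, 0 < mu l)%N -> (\sum_(l < k) mu l)%N = #|V| -> (#|V| <= 1)%N ->
  (k <= 1)%N.
Proof.
move=> hmu hs h; apply: leq_trans h; rewrite -hs.
have hk : (\sum_(l < k) 1)%N = k by rewrite sum1_card card_ord.
rewrite -[X in (X <= _)%N]hk.
by apply: leq_sum => l _; exact: hmu.
Qed.

Lemma ord_le1 (k : nat) (i j : 'I_k) : (k <= 1)%N -> i = j.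
Proof.
move=> hk; apply: ord_inj.
have hi : nat_of_ord i = 0%N by apply/eqP; rewrite -leqn0 -ltnS (leq_trans (ltn_ord i) hk).
have hj : nat_of_ord j = 0%N by apply/eqP; rewrite -leqn0 -ltnS (leq_trans (ltn_ord j) hk).
by rewrite hi hj.
Qed.

Section Comb2.
Context {R : realType} {V : finType} {E : {set {set V}}} {k : nat} {mu : 'I_k -> nat}
  {Z : {set V} -> {set 'I_k} -> R[i]}.

Local Notation Q := (Qpoly E mu Z).

Lemma Q_decompP W I v : uniq (rcons W v) -> size W = size I ->
  Q W I = \sum_(j | adm_I mu (rcons I j)) Q (rcons W v) (rcons I j).
Proof.
move=> hu hs; rewrite (Q_decomp _ _ v hs) (bigID (fun j => adm_I mu (rcons I j))) /=.
rewrite [X in _ + X]big1 ?addr0 // => j hj.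
by apply: Q_nonadm => //; rewrite !size_rcons hs.
Qed.

Lemma Q_small u i : simple_graph E -> (forall l, 0 < mu l)%N ->
  (\sum_(l < k) mu l)%N = #|V| -> (#|V| <= 1)%N -> Q [:: u] [:: i] != 0.
Proof.
move=> hE hmu hsum h1.
have hk := @k_le1 V k mu hmu hsum h1.
have E0 : forall A, A \in E = false.
  move=> A; apply/negP => /hE hA; have := max_card A; rewrite hA => h2.
  by have := leq_trans h2 h1.
rewrite /Qpoly.
under eq_bigr => phi _ do rewrite big_pred0 //.
pose P := fun phi : {ffun V -> 'I_k} =>
  [forall l, #|phi @^-1: [set l]| == mu l] && all2 (fun v i => phi v == i) [:: u] [:: i].
rewrite (eq_bigl (mem [pred phi | P phi])) // sumr_const.
pose phi0 : {ffun V -> 'I_k} := [ffun _ => i].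
have hP : P phi0.
  rewrite /P; apply/andP; split; last by rewrite /= ffunE eqxx.
  apply/forallP => l.
  rewrite (@ord_le1 k l i hk).
  have -> : phi0 @^-1: [set i] = [set: V].
    by apply/setP => v; rewrite !inE ffunE eqxx.
  rewrite cardsT -hsum.
  rewrite (bigD1 i) //= big1 ?addn0 // => j hj.
  by move: hj; rewrite (@ord_le1 k j i hk) eqxx.
have hc : (0 < #|[pred phi | P phi]|)%N by apply/card_gt0P; exists phi0.
by rewrite -mulr_natr mul1r pnatr_eq0 -lt0n.
Qed.

End Comb2.


Lemma natC (R : realType) n : (n%:R : R[i]) = Complex (n%:R) 0.
Proof. exact: esym (rmorph_nat (real_complex R) n). Qed.
Lemma scaleRe (R : realType) (a : R) (x : R[i]) : complex.Re (Complex a 0 * x) = a * complex.Re x.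
Proof. by case: x => x1 x2 /=; ring. Qed.
Lemma scaleIm (R : realType) (a : R) (x : R[i]) : complex.Im (Complex a 0 * x) = a * complex.Im x.
Proof. by case: x => x1 x2 /=; ring. Qed.

Lemma cabs_realC (R : realType) (a : R) : 0 <= a -> cabs (Complex a 0) = a.
Proof. by move=> ha; rewrite /cabs /= expr0n /= addr0 sqrtr_sqr ger0_norm. Qed.

Lemma cangle_scale (R : realType) (n m : nat) (x y : R[i]) : (0 < n)%N -> (0 < m)%N ->
  x != 0 -> y != 0 -> cangle (n%:R * x) (m%:R * y) = cangle x y.
Proof.
move=> hn hm hx hy; rewrite /cangle !natC !scaleRe !scaleIm !cabsM.
rewrite !cabs_realC ?ler0n //; congr acos.
have hn0 : (n%:R : R) != 0 by rewrite pnatr_eq0 -lt0n.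
have hm0 : (m%:R : R) != 0 by rewrite pnatr_eq0 -lt0n.
have hx0 : cabs x != 0 by rewrite cabs_eq0.
have hy0 : cabs y != 0 by rewrite cabs_eq0.
by field; rewrite hn0 hm0 hx0 hy0.
Qed.

Lemma cangle_self (R : realType) (x : R[i]) (r : R) : x != 0 -> 0 <= r < 1 ->
  cangle x x <= asin r.
Proof.
move=> hx hr.
have hx0 : cabs x != 0 by rewrite cabs_eq0.
have -> : cangle x x = acos 1.
  rewrite /cangle; congr acos.
  by rewrite -!expr2 -cabs_sq divff // expf_neq0.
apply: acos_le_asin => //.
  by apply/andP; split; lra.
rewrite -[X in _ <= X]sqrtr1; apply: ler_wsqrtr.
have := sqr_ge0 r; lra.
Qed.

Theorem proposition4p3 (R : realType) (V : finType) (E : {set {set V}})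
    (k : nat) (mu : 'I_k -> nat)
    (Z : {set V} -> {set 'I_k} -> R[i])
    (W : seq V) (I : seq 'I_k) (eps theta : R) :
  simple_graph E ->
  (forall i, (0 < mu i)%N) ->
  (\sum_(i < k) mu i)%N = #|V| ->
  adm_W W -> adm_I mu I ->
  size W = size I -> (size W <= #|V| - 2)%N ->
  0 < eps -> 0 <= theta -> theta < 2%:R * pi / 3%:R ->
  eps < cos (theta / 2%:R) ->
  (forall (u v : V) (i j : 'I_k),
     adm_W (rcons (rcons W u) v) -> adm_I mu (rcons (rcons I i) j) ->
     [/\ Qpoly E mu Z (rcons (rcons W u) v) (rcons (rcons I i) j) != 0,
         Qpoly E mu Z (rcons (rcons W u) v) (rcons (rcons I j) i) != 0 &
         cabs (Qpoly E mu Z (rcons (rcons W u) v) (rcons (rcons I i) j)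
               / Qpoly E mu Z (rcons (rcons W u) v) (rcons (rcons I j) i) - 1)
           <= eps]) ->
  ((forall (u v : V) (i j1 j2 : 'I_k),
      adm_W (rcons (rcons W u) v) ->
      adm_I mu (rcons (rcons I i) j1) -> adm_I mu (rcons (rcons I i) j2) ->
      cangle (Qpoly E mu Z (rcons (rcons W u) v) (rcons (rcons I i) j1))
             (Qpoly E mu Z (rcons (rcons W u) v) (rcons (rcons I i) j2))
        <= theta) ->
   forall (u v : V) (i : 'I_k),
     adm_W (rcons W u) -> adm_W (rcons W v) -> adm_I mu (rcons I i) ->
     [/\ Qpoly E mu Z (rcons W u) (rcons I i) != 0,
         Qpoly E mu Z (rcons W v) (rcons I i) != 0 &
         cangle (Qpoly E mu Z (rcons W u) (rcons I i))
                (Qpoly E mu Z (rcons W v) (rcons I i))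
           <= asin (eps / cos (theta / 2%:R))])
  /\
  ((forall (u v1 v2 : V) (i j : 'I_k),
      adm_W (rcons (rcons W u) v1) -> adm_W (rcons (rcons W u) v2) ->
      adm_I mu (rcons (rcons I i) j) ->
      cangle (Qpoly E mu Z (rcons (rcons W u) v1) (rcons (rcons I i) j))
             (Qpoly E mu Z (rcons (rcons W u) v2) (rcons (rcons I i) j))
        <= theta) ->
   forall (u : V) (i j : 'I_k),
     adm_W (rcons W u) -> adm_I mu (rcons I i) -> adm_I mu (rcons I j) ->
     [/\ Qpoly E mu Z (rcons W u) (rcons I i) != 0,
         Qpoly E mu Z (rcons W u) (rcons I j) != 0 &
         cangle (Qpoly E mu Z (rcons W u) (rcons I i))
                (Qpoly E mu Z (rcons W u) (rcons I j))
           <= asin (eps / cos (theta / 2%:R))]).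
Proof.
move=> hE hmu hsum hW hI hs hsz he ht0 ht1 hec heps.
have hc := cos_half_gt theta ht0 ht1.
set c := cos (theta / 2%:R) in hec hc *.
have hr : 0 <= eps / c < 1.
  apply/andP; split; first by rewrite divr_ge0 //; lra.
  by rewrite ltr_pdivrMr ?mul1r //; lra.
set r := eps / c in hr *.
have small : (#|V| <= 1)%N -> W = [::] /\ I = [::].
  move=> h1; have : size W = 0%N.
    by apply/eqP; rewrite -leqn0; apply: leq_trans hsz _; rewrite leqn0 subn_eq0 (leq_trans h1).
  move=> /size0nil hW0; split => //; apply: size0nil; by rewrite -hs hW0.
have hsmall : (#|V| <= 1)%N -> forall u i, Qpoly E mu Z [:: u] [:: i] != 0.
  by move=> h1 u i; apply: Q_small.
have bigszW : (1 < #|V|)%N -> forall u : V, (size (rcons W u) < #|V|)%N.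
  move=> h2 u; rewrite size_rcons; lia.
have bigszI : (1 < #|V|)%N -> forall i : 'I_k, (size (rcons I i) < \sum_(l < k) mu l)%N.
  move=> h2 i; rewrite size_rcons hsum -hs; lia.
split.
- move=> hang1.
  have core1 : forall u v i, (1 < #|V|)%N -> adm_W (rcons W u) -> adm_W (rcons W v) ->
      u != v -> adm_I mu (rcons I i) ->
      [/\ Qpoly E mu Z (rcons W u) (rcons I i) != 0, Qpoly E mu Z (rcons W v) (rcons I i) != 0 &
          cangle (Qpoly E mu Z (rcons W u) (rcons I i)) (Qpoly E mu Z (rcons W v) (rcons I i))
            <= asin r].
    move=> u v i h2 hWu hWv huv hIi.
    have vW : v \notin W by move: hWv; rewrite /adm_W rcons_uniq => /andP[].
    have uW : u \notin W by move: hWu; rewrite /adm_W rcons_uniq => /andP[].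
    have hWuv : adm_W (rcons (rcons W u) v).
      by rewrite /adm_W rcons_uniq (hWu : uniq (rcons W u)) andbT mem_rcons in_cons negb_or eq_sym huv vW.
    have hWvu : adm_W (rcons (rcons W v) u).
      by rewrite /adm_W rcons_uniq (hWv : uniq (rcons W v)) andbT mem_rcons in_cons negb_or huv uW.
    have [j0 Pj0] := @exists_adm k mu _ hIi (bigszI h2 i).
    have hsI : size (rcons W u) = size (rcons I i) by rewrite !size_rcons hs.
    have hsI' : size (rcons W v) = size (rcons I i) by rewrite !size_rcons hs.
    have eA : \sum_(j | adm_I mu (rcons (rcons I i) j))
        Qpoly E mu Z (rcons (rcons W u) v) (rcons (rcons I i) j) = Qpoly E mu Z (rcons W u) (rcons I i).
      by rewrite -Q_decompP.
    have eB : \sum_(j | adm_I mu (rcons (rcons I i) j))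
        Qpoly E mu Z (rcons (rcons W u) v) (rcons (rcons I j) i) = Qpoly E mu Z (rcons W v) (rcons I i).
      rewrite (Q_decompP (rcons W v) (rcons I i) u) //; apply: eq_bigr => j _; exact: Q_swap.
    case: (@analytic R 'I_k (fun j => adm_I mu (rcons (rcons I i) j))
       (fun j => Qpoly E mu Z (rcons (rcons W u) v) (rcons (rcons I i) j))
       (fun j => Qpoly E mu Z (rcons (rcons W u) v) (rcons (rcons I j) i)) eps theta j0 he ht0 ht1 hec Pj0).
    + move=> j Pj; have [_ h1 h3] := heps u v i j hWuv Pj; by split.
    + move=> j l Pj Pl /=; rewrite !(Q_swap W I u v) //; exact: hang1 v u i j l hWvu Pj Pl.
    + by rewrite eA eB.
  move=> u v i hWu hWv hIi.
  case: (leqP #|V| 1) => h.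
    have [W0 I0] := small h; subst W I.
    rewrite -(@V_le1 V u v h); have hq := hsmall h u i.
    by split => //; exact: cangle_self.
  case: (eqVneq u v) => [<-|huv]; last exact: core1.
  have [w hw] := @exists_notin V _ (bigszW h u).
  have uw : u != w by apply: contraNneq hw => <-; rewrite mem_rcons mem_head.
  have hWw : adm_W (rcons W w).
    move: hWu hw; rewrite /adm_W !rcons_uniq mem_rcons in_cons negb_or => /andP[_ ->].
    by case/andP => _ ->.
  have [hq _ _] := core1 u w i h hWu hWw uw hIi.
  by split => //; exact: cangle_self.
- move=> hang2.
  have core2 : forall u i j, (1 < #|V|)%N -> adm_W (rcons W u) -> adm_I mu (rcons (rcons I i) j) ->
      [/\ Qpoly E mu Z (rcons W u) (rcons I i) != 0, Qpoly E mu Z (rcons W u) (rcons I j) != 0 &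
          cangle (Qpoly E mu Z (rcons W u) (rcons I i)) (Qpoly E mu Z (rcons W u) (rcons I j))
            <= asin r].
    move=> u i j h2 hWu hIij.
    have hIji : adm_I mu (rcons (rcons I j) i) by rewrite adm_swap.
    have [v0 hv0] := @exists_notin V _ (bigszW h2 u).
    have hWuv : forall v, v \notin rcons W u -> adm_W (rcons (rcons W u) v).
      by move=> v hv; rewrite /adm_W rcons_uniq hv; exact: hWu.
    have eA := Q_dc (E := E) (Z := Z) W I u i j hWu hs.
    have eB := Q_dc (E := E) (Z := Z) W I u j i hWu hs.
    have n1 : (0 < mu j - count_mem j (rcons I i))%N by rewrite subn_gt0; exact: adm_rcons_lt.
    have n2 : (0 < mu i - count_mem i (rcons I j))%N by rewrite subn_gt0; exact: adm_rcons_lt.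
    case: (@analytic R V (fun v => v \notin rcons W u)
       (fun v => Qpoly E mu Z (rcons (rcons W u) v) (rcons (rcons I i) j))
       (fun v => Qpoly E mu Z (rcons (rcons W u) v) (rcons (rcons I j) i)) eps theta v0 he ht0 ht1 hec hv0).
    + move=> v Pv; have [_ h1 h3] := heps u v i j (hWuv v Pv) hIij; by split.
    + move=> v1 v2 P1 P2 /=; exact: hang2 u v1 v2 j i (hWuv v1 P1) (hWuv v2 P2) hIji.
    rewrite eA eB => hA hB hang.
    have hX : Qpoly E mu Z (rcons W u) (rcons I i) != 0 by apply: contraNneq hA => ->; rewrite mulr0.
    have hY : Qpoly E mu Z (rcons W u) (rcons I j) != 0 by apply: contraNneq hB => ->; rewrite mulr0.
    by rewrite cangle_scale in hang.
  move=> u i j hWu hIi hIj.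
  case: (leqP #|V| 1) => h.
    have [W0 I0] := small h; subst W I.
    rewrite -(@ord_le1 k i j (@k_le1 V k mu hmu hsum h)); have hq := hsmall h u i.
    by split => //; exact: cangle_self.
  case: (boolP (adm_I mu (rcons (rcons I i) j))) => hij; first exact: core2.
  have eij : i = j.
    apply/eqP; apply: contraNT hij => nij; apply: adm_rcons => //.
    move: (@adm_rcons_lt k mu _ _ hIj); rewrite -cats1 count_cat /= (negbTE nij) !addn0 //.
  subst j.
  have [l hl] := @exists_adm k mu _ hIi (bigszI h i).
  have [hq _ _] := core2 u i l h hWu hl.
  by split => //; exact: cangle_self.
Qed.
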